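(* Let $k\in\mathbb N$ and $f\in\mathcal R^{k+1}_{[1]}(\mathbb R^2)$. Then for every $v\in\mathbb R^2$, the partial derivative $\partial_v f$ belongs to $\mathcal R^k_{[1]}(\mathbb R^2)$.
   Context: For $k\in\mathbb N\cup\{\infty\}$, $\mathcal R^k(\mathbb R^2)$ denotes the ring of functions $f:\mathbb R^2\to\mathbb R$ of class $C^k$ that coincide with $p/q$ ($p,q$ polynomials, $q$ nonvanishing there) on some nonempty Zariski open set. For $l\in\mathbb N$: consider compositions $\pi:M\to\mathbb R^2$ of successive blowings-up $M_i\to M_{i-1}$ ($M_0=\mathbb R^2$), each centred at points. An infinitely near point of order $j$ is a sequence $a_0\in M_0,\dots,a_j\in M_j$ where $M_i$ is the blowing-up of $M_{i-1}$ at $a_{i-1}$ and $a_i$ maps to $a_{i-1}$; the number of stages of $\pi$ is the maximal order of infinitely near points in $M$. $\mathcal R^k_{[l]}(\mathbb R^2)$ is the set of $f\in\mathcal R^k(\mathbb R^2)$ for which there is such a $\pi$ with at most $l$ stages such that $f\circ\pi$ is regular on $M$. $\partial_v f$ denotes the directional derivative of $f$ in direction $v$. *)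

(* Defs.v *)
From Stdlib Require Import Reals List.
Open Scope R_scope.

Inductive is_poly2 : (R -> R -> R) -> Prop :=
| poly2_const (c : R) : is_poly2 (fun _ _ => c)
| poly2_X : is_poly2 (fun x _ => x)
| poly2_Y : is_poly2 (fun _ y => y)
| poly2_add (p q : R -> R -> R) :
    is_poly2 p -> is_poly2 q -> is_poly2 (fun x y => p x y + q x y)
| poly2_mul (p q : R -> R -> R) :
    is_poly2 p -> is_poly2 q -> is_poly2 (fun x y => p x y * q x y).

Definition continuous2 (f : R -> R -> R) : Prop :=
  forall x y eps, 0 < eps -> exists delta, 0 < delta /\
    forall x' y', Rabs (x' - x) < delta -> Rabs (y' - y) < delta ->
      Rabs (f x' y' - f x y) < eps.

Fixpoint Ck2 (k : nat) (f : R -> R -> R) : Prop :=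
  match k with
  | O => continuous2 f
  | S k' => exists fx fy : R -> R -> R,
      (forall x y, derivable_pt_lim (fun t => f t y) x (fx x y)) /\
      (forall x y, derivable_pt_lim (fun t => f x t) y (fy x y)) /\
      Ck2 k' fx /\ Ck2 k' fy
  end.

(** f coincides with p/q (q nonvanishing) on a nonempty Zariski open set
    (here the basic open set {g <> 0}, g a nonzero polynomial). *)
Definition rational2 (f : R -> R -> R) : Prop :=
  exists p q g, is_poly2 p /\ is_poly2 q /\ is_poly2 g /\
    (exists x y, g x y <> 0) /\
    forall x y, g x y <> 0 -> q x y <> 0 /\ f x y = p x y / q x y.

Definition Rk (k : nat) (f : R -> R -> R) : Prop := Ck2 k f /\ rational2 f.

Definition regular_on (U : R -> R -> Prop) (g : R -> R -> R) : Prop :=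
  forall x y, U x y -> exists p q, is_poly2 p /\ is_poly2 q /\ q x y <> 0 /\
    forall x' y', U x' y' -> q x' y' <> 0 -> g x' y' = p x' y' / q x' y'.

(** The two standard affine charts (each a copy of R^2) of the blowing-up
    of R^2 at the point a. *)
Definition chart1 (a : R * R) (u w : R) : R * R := (fst a + u, snd a + u * w).
Definition chart2 (a : R * R) (u w : R) : R * R := (fst a + u * w, snd a + w).

(** Regularity of f o pi on M, where pi : M -> R^2 is the blowing-up of R^2
    at the finitely many distinct points of A (a one-stage composition of
    point blowings-up). M is covered by pi^{-1}(R^2 \ A) ~ R^2 \ A and, for
    each a in A, the two charts of the blowing-up at a, restricted to the
    complement of the preimages of the other centres. *)
Definition chart_dom (A : list (R * R)) (a : R * R)
    (ch : R * R -> R -> R -> R * R) : R -> R -> Prop :=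
  fun u w => forall b, In b A -> b <> a -> ch a u w <> b.

Definition regular_after_blowup (A : list (R * R)) (f : R -> R -> R) : Prop :=
  NoDup A /\
  regular_on (fun x y => ~ In (x, y) A) f /\
  forall a, In a A ->
    regular_on (chart_dom A a chart1)
      (fun u w => f (fst (chart1 a u w)) (snd (chart1 a u w))) /\
    regular_on (chart_dom A a chart2)
      (fun u w => f (fst (chart2 a u w)) (snd (chart2 a u w))).

Definition Rk1 (k : nat) (f : R -> R -> R) : Prop :=
  Rk k f /\ exists A : list (R * R), regular_after_blowup A f.

Definition dirderiv (f : R -> R -> R) (v : R * R) (g : R -> R -> R) : Prop :=
  forall x y, derivable_pt_lim (fun t => f (x + t * fst v) (y + t * snd v)) 0 (g x y).

(* Main.v *)
Require Import Defs.
From Stdlib Require Import Reals List Lra.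
From Stdlib Require Import Classical FunctionalExtensionality.
From Coquelicot Require Import Coquelicot.
Open Scope R_scope.

Lemma poly_ext p q : is_poly2 p -> (forall x y, p x y = q x y) -> is_poly2 q.
Proof.
  intros H E. replace q with p; auto.
  apply functional_extensionality; intro x; apply functional_extensionality; intro y; auto.
Qed.

Lemma poly_sub p q : is_poly2 p -> is_poly2 q -> is_poly2 (fun x y => p x y - q x y).
Proof.
  intros Hp Hq. apply poly_ext with (fun x y => p x y + (-1) * q x y).
  - apply poly2_add; auto. apply poly2_mul; auto. apply poly2_const.
  - intros; ring.
Qed.

Lemma poly_sub0 p : is_poly2 p -> is_poly2 (fun u w => p 0 w).
Proof.
  induction 1; simpl.
  - apply poly2_const.
  - apply poly2_const.
  - apply poly2_Y.
  - apply poly2_add; auto.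
  - apply poly2_mul; auto.
Qed.

Lemma poly_swap p : is_poly2 p -> is_poly2 (fun x y => p y x).
Proof.
  induction 1; simpl.
  - apply poly2_const.
  - apply poly2_Y.
  - apply poly2_X.
  - apply poly2_add; auto.
  - apply poly2_mul; auto.
Qed.

Lemma poly_split p : is_poly2 p -> exists m, is_poly2 m /\ forall u w, p u w = p 0 w + u * m u w.
Proof.
  induction 1.
  - exists (fun _ _ => 0). split. apply poly2_const. intros; ring.
  - exists (fun _ _ => 1). split. apply poly2_const. intros; ring.
  - exists (fun _ _ => 0). split. apply poly2_const. intros; ring.
  - destruct IHis_poly2_1 as [m1 [h1 E1]]. destruct IHis_poly2_2 as [m2 [h2 E2]].
    exists (fun u w => m1 u w + m2 u w). split. apply poly2_add; auto.
    intros. rewrite (E1 u w), (E2 u w). ring.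
  - destruct IHis_poly2_1 as [m1 [h1 E1]]. destruct IHis_poly2_2 as [m2 [h2 E2]].
    exists (fun u w => m1 u w * q u w + p 0 w * m2 u w). split.
    + apply poly2_add; apply poly2_mul; auto. apply poly_sub0; auto.
    + intros. rewrite (E1 u w), (E2 u w). ring.
Qed.

Lemma poly_cont p : is_poly2 p -> forall x y, continuity_2d_pt p x y.
Proof.
  induction 1; intros.
  - apply continuity_2d_pt_const.
  - apply continuity_2d_pt_id1.
  - apply continuity_2d_pt_id2.
  - apply continuity_2d_pt_plus; auto.
  - apply continuity_2d_pt_mult; auto.
Qed.

Lemma poly_dx p : is_poly2 p -> exists px, is_poly2 px /\
  forall x y, derivable_pt_lim (fun t => p t y) x (px x y).
Proof.
  induction 1.
  - exists (fun _ _ => 0). split. apply poly2_const. intros. apply derivable_pt_lim_const.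
  - exists (fun _ _ => 1). split. apply poly2_const. intros. apply derivable_pt_lim_id.
  - exists (fun _ _ => 0). split. apply poly2_const. intros. apply derivable_pt_lim_const.
  - destruct IHis_poly2_1 as [m1 [h1 E1]]. destruct IHis_poly2_2 as [m2 [h2 E2]].
    exists (fun u w => m1 u w + m2 u w). split. apply poly2_add; auto.
    intros. apply (derivable_pt_lim_plus (fun t => p t y) (fun t => q t y)); auto.
  - destruct IHis_poly2_1 as [m1 [h1 E1]]. destruct IHis_poly2_2 as [m2 [h2 E2]].
    exists (fun u w => m1 u w * q u w + p u w * m2 u w). split.
    + apply poly2_add; apply poly2_mul; auto.
    + intros. apply (derivable_pt_lim_mult (fun t => p t y) (fun t => q t y)); auto.
Qed.

Lemma poly_dy p : is_poly2 p -> exists py, is_poly2 py /\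
  forall x y, derivable_pt_lim (fun t => p x t) y (py x y).
Proof.
  intro H. destruct (poly_dx _ (poly_swap _ H)) as [m [hm E]].
  exists (fun x y => m y x). split. apply poly_swap; auto.
  intros. apply (E y x).
Qed.

Lemma dpl_loc (g1 g2 : R -> R) s l d : 0 < d ->
  (forall t, Rabs (t - s) < d -> g1 t = g2 t) ->
  derivable_pt_lim g1 s l -> derivable_pt_lim g2 s l.
Proof.
  intros Hd He H eps He0. destruct (H eps He0) as [del Hdel].
  assert (Hm : 0 < Rmin del d) by (apply Rmin_pos; [apply cond_pos | auto]).
  exists (mkposreal _ Hm). intros h hn hl. simpl in hl.
  rewrite <- !He. apply Hdel; auto.
  - apply Rlt_le_trans with (1 := hl); apply Rmin_l.
  - rewrite Rminus_eq_0, Rabs_R0; auto.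
  - replace (s + h - s) with h by ring. apply Rlt_le_trans with (1 := hl); apply Rmin_r.
Qed.

Lemma dpl_affine (g : R -> R) a b s : (forall t, g t = a + b * t) ->
  derivable_pt_lim g s b.
Proof.
  intros E eps He. exists (mkposreal 1 Rlt_0_1). intros h hn _.
  rewrite !E. replace ((a + b * (s + h) - (a + b * s)) / h - b) with 0 by (field; auto).
  rewrite Rabs_R0; auto.
Qed.

Lemma local_rep1 (g p q : R -> R) x0 lg lp lq d : 0 < d ->
  (forall t, Rabs (t - x0) < d -> q t <> 0 /\ g t = p t / q t) ->
  derivable_pt_lim g x0 lg -> derivable_pt_lim p x0 lp -> derivable_pt_lim q x0 lq ->
  lg = (lp * q x0 - p x0 * lq) / (q x0 * q x0).
Proof.
  intros Hd H Hg Hp Hq.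
  assert (Hq0 : q x0 <> 0) by (apply (H x0); rewrite Rminus_eq_0, Rabs_R0; auto).
  pose proof (derivable_pt_lim_div p q x0 lp lq Hp Hq Hq0) as D.
  assert (D' : derivable_pt_lim g x0 ((lp * q x0 - lq * p x0) / Rsqr (q x0))).
  { apply dpl_loc with (g1 := (p / q)%F) (d := d).
    - exact Hd.
    - intros t Ht. destruct (H t Ht) as [_ E]. rewrite E. reflexivity.
    - exact D. }
  rewrite (uniqueness_limite _ _ _ _ Hg D'). unfold Rsqr. field; auto.
Qed.

Lemma absbound a h e : Rabs a < e -> Rabs (a * h) <= e * Rabs h.
Proof.
  intro H. rewrite Rabs_mult. apply Rmult_le_compat_r. apply Rabs_pos. lra.
Qed.

Lemma C1_diff f fx fy :
  (forall x y, derivable_pt_lim (fun t => f t y) x (fx x y)) ->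
  (forall x y, derivable_pt_lim (fun t => f x t) y (fy x y)) ->
  (forall x y, continuity_2d_pt fx x y) ->
  forall x y, differentiable_pt_lim f x y (fx x y) (fy x y).
Proof.
  intros Hx Hy Hc x y eps.
  assert (he2 : 0 < eps / 2) by (generalize (cond_pos eps); lra).
  destruct (Hc x y (mkposreal _ he2)) as [d1 Hd1].
  destruct (Hy x y (eps/2) he2) as [d2 Hd2].
  assert (Hm : 0 < Rmin d1 d2) by (apply Rmin_pos; apply cond_pos).
  exists (mkposreal _ Hm). intros u v Hu Hv. simpl in Hu, Hv, Hd1.
  assert (Hu1 : Rabs (u - x) < d1) by (apply Rlt_le_trans with (1 := Hu); apply Rmin_l).
  assert (Hv1 : Rabs (v - y) < d1) by (apply Rlt_le_trans with (1 := Hv); apply Rmin_l).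
  assert (Hv2 : Rabs (v - y) < d2) by (apply Rlt_le_trans with (1 := Hv); apply Rmin_r).
  assert (B : Rabs (f x v - f x y - fy x y * (v - y)) <= eps/2 * Rabs (v - y)).
  { destruct (Req_dec v y) as [E|E].
    - subst. replace (f x y - f x y - fy x y * (y - y)) with 0 by ring.
      rewrite Rabs_R0. apply Rmult_le_pos. lra. apply Rabs_pos.
    - assert (hn : v - y <> 0) by lra.
      pose proof (Hd2 (v - y) hn Hv2) as K.
      replace (y + (v - y)) with v in K by ring.
      replace (f x v - f x y - fy x y * (v - y)) with
        (((f x v - f x y) / (v - y) - fy x y) * (v - y)) by (field; auto).
      apply absbound; auto. }
  assert (A : Rabs (f u v - f x v - fx x y * (u - x)) <= eps/2 * Rabs (u - x)).
  { destruct (total_order_T u x) as [[L|E]|L].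
    - destruct (MVT_cor2 (fun s => f s v) (fun s => fx s v) u x L) as [c [Ec Hc']].
      { intros; apply Hx. }
      replace (f u v - f x v - fx x y * (u - x)) with ((fx c v - fx x y) * (u - x)) by lra.
      apply absbound. apply Hd1; auto.
      apply Rle_lt_trans with (2 := Hu1). rewrite !Rabs_left by lra. lra.
    - subst. replace (f x v - f x v - fx x y * (x - x)) with 0 by ring.
      rewrite Rabs_R0. apply Rmult_le_pos. lra. apply Rabs_pos.
    - destruct (MVT_cor2 (fun s => f s v) (fun s => fx s v) x u L) as [c [Ec Hc']].
      { intros; apply Hx. }
      replace (f u v - f x v - fx x y * (u - x)) with ((fx c v - fx x y) * (u - x)) by lra.
      apply absbound. apply Hd1; auto.
      apply Rle_lt_trans with (2 := Hu1). rewrite !Rabs_right by lra. lra. }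
  replace (f u v - f x y - (fx x y * (u - x) + fy x y * (v - y))) with
    ((f u v - f x v - fx x y * (u - x)) + (f x v - f x y - fy x y * (v - y))) by ring.
  eapply Rle_trans. apply Rabs_triang.
  generalize (Rmax_l (Rabs (u - x)) (Rabs (v - y))) (Rmax_r (Rabs (u - x)) (Rabs (v - y))).
  generalize (cond_pos eps). nra.
Qed.

Lemma cont2_to (h : R -> R -> R) : continuous2 h -> forall x y, continuity_2d_pt h x y.
Proof.
  intros H x y eps. destruct (H x y eps (cond_pos eps)) as [d [Hd H']].
  exists (mkposreal d Hd). intros; apply H'; auto.
Qed.

Lemma cont2_from (h : R -> R -> R) : (forall x y, continuity_2d_pt h x y) -> continuous2 h.
Proof.
  intros H x y eps Heps. destruct (H x y (mkposreal eps Heps)) as [d Hd].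
  exists d. split. apply cond_pos. intros; apply Hd; auto.
Qed.

Lemma Ck2_cont n : forall h, Ck2 n h -> forall x y, continuity_2d_pt h x y.
Proof.
  induction n; simpl; intros h H.
  - apply cont2_to; auto.
  - destruct H as [hx [hy [Hx [Hy [Cx Cy]]]]]. intros x y.
    apply differentiable_continuity_pt. exists (hx x y), (hy x y).
    apply C1_diff; auto.
Qed.

Lemma Ck2_lin n : forall a b c1 c2, Ck2 n a -> Ck2 n b ->
  Ck2 n (fun x y => c1 * a x y + c2 * b x y).
Proof.
  induction n; simpl; intros a b c1 c2 Ha Hb.
  - apply cont2_from. intros. apply continuity_2d_pt_plus; apply continuity_2d_pt_mult;
      try apply continuity_2d_pt_const; apply cont2_to; auto.
  - destruct Ha as [ax [ay [Hax [Hay [Cax Cay]]]]].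
    destruct Hb as [bx [by' [Hbx [Hby [Cbx Cby]]]]].
    exists (fun x y => c1 * ax x y + c2 * bx x y), (fun x y => c1 * ay x y + c2 * by' x y).
    repeat split; auto; intros.
    + apply (derivable_pt_lim_plus (fun t => c1 * a t y) (fun t => c2 * b t y));
        apply (derivable_pt_lim_scal (fun t => _ t y)); auto.
    + apply (derivable_pt_lim_plus (fun t => c1 * a x t) (fun t => c2 * b x t));
        apply (derivable_pt_lim_scal (fun t => _ x t)); auto.
Qed.
Lemma open_avoid (L : list (R * R)) (P : R * R -> Prop) (h1 h2 : R -> R -> R) :
  (forall u w, continuity_2d_pt h1 u w) -> (forall u w, continuity_2d_pt h2 u w) ->
  forall u w, (forall b, In b L -> P b -> (h1 u w, h2 u w) <> b) ->
  locally_2d (fun u' w' => forall b, In b L -> P b -> (h1 u' w', h2 u' w') <> b) u w.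
Proof.
  intros C1 C2. induction L as [|b0 L IH]; intros u w H.
  - apply locally_2d_forall. intros u' w' b Hb. destruct Hb.
  - apply locally_2d_impl with
      (fun u' w' => (P b0 -> (h1 u' w', h2 u' w') <> b0) /\
         forall b, In b L -> P b -> (h1 u' w', h2 u' w') <> b).
    { apply locally_2d_forall. intros u' w' [H1 H2] b [<-|Hin]; auto. }
    apply locally_2d_and.
    + destruct (classic (P b0)) as [Pb|Pb].
      * assert (Hne : (h1 u w, h2 u w) <> b0) by (apply H; simpl; auto).
        destruct (Req_dec (h1 u w) (fst b0)) as [E1|E1].
        -- assert (E2 : h2 u w - snd b0 <> 0).
           { intro E2. apply Hne. destruct b0; simpl in *. f_equal; lra. }
           apply locally_2d_impl with (fun u' w' => h2 u' w' - snd b0 <> 0).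
           { apply locally_2d_forall. intros u' w' Hn _ Heq. apply Hn. rewrite <- Heq; simpl; ring. }
           apply continuity_2d_pt_neq_0; auto.
           apply continuity_2d_pt_minus; auto. apply continuity_2d_pt_const.
        -- assert (E2 : h1 u w - fst b0 <> 0) by lra.
           apply locally_2d_impl with (fun u' w' => h1 u' w' - fst b0 <> 0).
           { apply locally_2d_forall. intros u' w' Hn _ Heq. apply Hn. rewrite <- Heq; simpl; ring. }
           apply continuity_2d_pt_neq_0; auto.
           apply continuity_2d_pt_minus; auto. apply continuity_2d_pt_const.
      * apply locally_2d_forall. intros; contradiction.
    + apply IH. intros b Hb. apply H. simpl; auto.
Qed.

Lemma eq_by_cont h1 h2 x y : continuity_2d_pt h1 x y -> continuity_2d_pt h2 x y ->
  locally_2d (fun u v => u <> x -> h1 u v = h2 u v) x y -> h1 x y = h2 x y.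
Proof.
  intros C1 C2 [d Hd].
  destruct (Req_dec (h1 x y) (h2 x y)) as [E|E]; auto. exfalso.
  assert (He : 0 < Rabs (h1 x y - h2 x y) / 2).
  { assert (0 < Rabs (h1 x y - h2 x y)) by (apply Rabs_pos_lt; lra). lra. }
  destruct (C1 (mkposreal _ He)) as [d1 H1]. destruct (C2 (mkposreal _ He)) as [d2 H2].
  simpl in H1, H2.
  set (t := Rmin d (Rmin d1 d2) / 2).
  assert (Ht0 : 0 < Rmin d (Rmin d1 d2)) by (repeat apply Rmin_pos; apply cond_pos).
  assert (Ht1 : Rmin d (Rmin d1 d2) <= d) by apply Rmin_l.
  assert (Ht2 : Rmin d (Rmin d1 d2) <= d1) by (eapply Rle_trans; [apply Rmin_r | apply Rmin_l]).
  assert (Ht3 : Rmin d (Rmin d1 d2) <= d2) by (eapply Rle_trans; [apply Rmin_r | apply Rmin_r]).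
  assert (At : Rabs (x + t - x) = t).
  { replace (x + t - x) with t by ring. apply Rabs_right. unfold t; lra. }
  assert (A0 : Rabs (y - y) = 0) by (rewrite Rminus_eq_0; apply Rabs_R0).
  assert (Eq : h1 (x + t) y = h2 (x + t) y).
  { apply Hd. rewrite At; unfold t; lra. rewrite A0; apply cond_pos. unfold t; lra. }
  assert (K1 : Rabs (h1 (x + t) y - h1 x y) < Rabs (h1 x y - h2 x y) / 2).
  { apply H1. rewrite At; unfold t; lra. rewrite A0; apply cond_pos. }
  assert (K2 : Rabs (h2 (x + t) y - h2 x y) < Rabs (h1 x y - h2 x y) / 2).
  { apply H2. rewrite At; unfold t; lra. rewrite A0; apply cond_pos. }
  rewrite Eq in K1.
  assert (Rabs (h1 x y - h2 x y) <= Rabs (h2 (x + t) y - h1 x y) + Rabs (h2 (x + t) y - h2 x y)).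
  { replace (h1 x y - h2 x y) with (- (h2 (x + t) y - h1 x y) + (h2 (x + t) y - h2 x y)) by ring.
    eapply Rle_trans. apply Rabs_triang. rewrite Rabs_Ropp. lra. }
  lra.
Qed.

Lemma cont_comp (g h1 h2 : R -> R -> R) u w :
  (forall x y, continuity_2d_pt g x y) -> continuity_2d_pt h1 u w -> continuity_2d_pt h2 u w ->
  continuity_2d_pt (fun a b => g (h1 a b) (h2 a b)) u w.
Proof.
  intros Cg C1 C2 eps. destruct (Cg (h1 u w) (h2 u w) eps) as [d Hd].
  apply locally_2d_impl with (fun a b => Rabs (h1 a b - h1 u w) < d /\ Rabs (h2 a b - h2 u w) < d).
  { apply locally_2d_forall. intros a b [? ?]. apply Hd; auto. }
  apply locally_2d_and; [apply C1 | apply C2].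
Qed.

Lemma cont_div (p q : R -> R -> R) x y : continuity_2d_pt p x y -> continuity_2d_pt q x y ->
  q x y <> 0 -> continuity_2d_pt (fun u v => p u v / q u v) x y.
Proof.
  intros. apply continuity_2d_pt_mult; auto. apply continuity_2d_pt_inv; auto.
Qed.

Lemma K_gen (U : R -> R -> Prop) (f fx fy P Px Py Q Qx Qy : R -> R -> R) :
  (forall x y, U x y -> locally_2d U x y) ->
  (forall x y, derivable_pt_lim (fun t => f t y) x (fx x y)) ->
  (forall x y, derivable_pt_lim (fun t => f x t) y (fy x y)) ->
  (forall x y, derivable_pt_lim (fun t => P t y) x (Px x y)) ->
  (forall x y, derivable_pt_lim (fun t => P x t) y (Py x y)) ->
  (forall x y, derivable_pt_lim (fun t => Q t y) x (Qx x y)) ->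
  (forall x y, derivable_pt_lim (fun t => Q x t) y (Qy x y)) ->
  is_poly2 Q ->
  (forall x y, U x y -> Q x y <> 0 -> f x y = P x y / Q x y) ->
  forall x y, U x y -> Q x y <> 0 ->
    fx x y = (Px x y * Q x y - P x y * Qx x y) / (Q x y * Q x y) /\
    fy x y = (Py x y * Q x y - P x y * Qy x y) / (Q x y * Q x y).
Proof.
  intros Uo Hfx Hfy HPx HPy HQx HQy hQ Hrep x y Hu Hq.
  assert (L : locally_2d (fun u v => Q u v <> 0 /\ f u v = P u v / Q u v) x y).
  { apply locally_2d_impl with (fun u v => U u v /\ Q u v <> 0).
    { apply locally_2d_forall. intros u v [? ?]. split; auto. }
    apply locally_2d_and; auto. apply continuity_2d_pt_neq_0; auto. apply poly_cont; auto. }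
  destruct L as [d Hd].
  assert (A0 : forall z, Rabs (z - z) < d) by (intro; rewrite Rminus_eq_0, Rabs_R0; apply cond_pos).
  split.
  - apply (local_rep1 (fun t => f t y) (fun t => P t y) (fun t => Q t y) x _ _ _ d);
      auto; try apply cond_pos.
  - apply (local_rep1 (fun t => f x t) (fun t => P x t) (fun t => Q x t) y _ _ _ d);
      auto; try apply cond_pos.
Qed.

Ltac poly := repeat first [ assumption | apply poly2_X | apply poly2_Y | apply poly2_const
  | apply poly_sub | apply poly2_add | apply poly2_mul ].

Lemma nz_mul a b : a * b <> 0 -> a <> 0 /\ b <> 0.
Proof. intro H; split; intro E; apply H; rewrite E; ring. Qed.

Lemma chart_core (U : R -> R -> Prop) (F G Fu Fw : R -> R -> R) (c1 c2 : R) :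
  (forall u w, U u w -> locally_2d U u w) ->
  (forall w, U 0 w) ->
  (forall u w, derivable_pt_lim (fun t => F t w) u (Fu u w)) ->
  (forall u w, derivable_pt_lim (fun t => F u t) w (Fw u w)) ->
  (forall w, Fw 0 w = 0) ->
  (forall u w, u <> 0 -> G u w = c1 * Fu u w + (c2 - c1 * w) * Fw u w / u) ->
  (forall u w, continuity_2d_pt G u w) ->
  regular_on U F -> regular_on U G.
Proof.
  intros Uo U0 HFu HFw Fw0 HG CG Hreg u0 w0 Hu0.
  destruct (Hreg u0 w0 Hu0) as [P [Q [hP [hQ [hQ0 Hrep]]]]].
  destruct (poly_dx P hP) as [Pu [hPu dPu]]. destruct (poly_dy P hP) as [Pw [hPw dPw]].
  destruct (poly_dx Q hQ) as [Qu [hQu dQu]]. destruct (poly_dy Q hQ) as [Qw [hQw dQw]].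
  pose proof (K_gen U F Fu Fw P Pu Pw Q Qu Qw Uo HFu HFw dPu dPw dQu dQw hQ Hrep) as K.
  assert (hNu : is_poly2 (fun u w => Pu u w * Q u w - P u w * Qu u w)) by poly.
  assert (hNw : is_poly2 (fun u w => Pw u w * Q u w - P u w * Qw u w)) by poly.
  destruct (Req_dec u0 0) as [Hz|Hnz].
  - subst u0.
    destruct (poly_split _ hNw) as [M [hM HM]]. simpl in HM.
    assert (Z : forall w, Q 0 w <> 0 -> Pw 0 w * Q 0 w - P 0 w * Qw 0 w = 0).
    { intros w Hw. destruct (K 0 w (U0 w) Hw) as [_ E]. rewrite Fw0 in E.
      replace (Pw 0 w * Q 0 w - P 0 w * Qw 0 w) with
        ((Pw 0 w * Q 0 w - P 0 w * Qw 0 w) / (Q 0 w * Q 0 w) * (Q 0 w * Q 0 w)) by (field; auto).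
      rewrite <- E. ring. }
    pose proof (poly_sub0 Q hQ) as hQ0'.
    set (p := fun u w => (c1 * (Pu u w * Q u w - P u w * Qu u w) + (c2 - c1 * w) * M u w) * Q 0 w).
    set (q := fun u w => Q u w * Q u w * Q 0 w).
    assert (hp : is_poly2 p) by (unfold p; poly).
    assert (hq : is_poly2 q) by (unfold q; poly).
    assert (C : forall u w, U u w -> q u w <> 0 -> u <> 0 -> G u w = p u w / q u w).
    { intros u w Hu Hq Hun. unfold q in Hq. apply nz_mul in Hq. destruct Hq as [Hq Hq0].
      apply nz_mul in Hq. destruct Hq as [Hq _].
      destruct (K u w Hu Hq) as [E1 E2].
      rewrite (HG u w Hun), E1, E2, (HM u w), (Z w Hq0). unfold p, q. field. auto. }
    exists p, q. split; [auto|]. split; [auto|]. split.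
    { unfold q. repeat apply Rmult_integral_contrapositive_currified; auto. }
    intros u w Hu Hq. destruct (Req_dec u 0) as [->|Hun]; [|apply C; auto].
    apply (eq_by_cont G (fun u w => p u w / q u w) 0 w).
    + apply CG.
    + apply cont_div; auto; apply poly_cont; auto.
    + apply locally_2d_impl with (fun u' w' => U u' w' /\ q u' w' <> 0).
      { apply locally_2d_forall. intros u' w' [? ?] ?. apply C; auto. }
      apply locally_2d_and; auto. apply continuity_2d_pt_neq_0; auto. apply poly_cont; auto.
  - exists (fun u w => c1 * (Pu u w * Q u w - P u w * Qu u w) * u
                  + (c2 - c1 * w) * (Pw u w * Q u w - P u w * Qw u w)),
           (fun u w => Q u w * Q u w * u).
    split; [poly|]. split; [poly|]. split.
    { repeat apply Rmult_integral_contrapositive_currified; auto. }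
    intros u w Hu Hq. apply nz_mul in Hq. destruct Hq as [Hq Hun].
    apply nz_mul in Hq. destruct Hq as [Hq _].
    destruct (K u w Hu Hq) as [E1 E2].
    rewrite (HG u w Hun), E1, E2. field. auto.
Qed.

Lemma reg_deriv (U : R -> R -> Prop) (f fx fy : R -> R -> R) c1 c2 :
  (forall x y, U x y -> locally_2d U x y) ->
  (forall x y, derivable_pt_lim (fun t => f t y) x (fx x y)) ->
  (forall x y, derivable_pt_lim (fun t => f x t) y (fy x y)) ->
  regular_on U f -> regular_on U (fun x y => c1 * fx x y + c2 * fy x y).
Proof.
  intros Uo Hfx Hfy Hreg x0 y0 Hu0.
  destruct (Hreg x0 y0 Hu0) as [P [Q [hP [hQ [hQ0 Hrep]]]]].
  destruct (poly_dx P hP) as [Pu [hPu dPu]]. destruct (poly_dy P hP) as [Pw [hPw dPw]].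
  destruct (poly_dx Q hQ) as [Qu [hQu dQu]]. destruct (poly_dy Q hQ) as [Qw [hQw dQw]].
  pose proof (K_gen U f fx fy P Pu Pw Q Qu Qw Uo Hfx Hfy dPu dPw dQu dQw hQ Hrep) as K.
  exists (fun u w => c1 * (Pu u w * Q u w - P u w * Qu u w)
                  + c2 * (Pw u w * Q u w - P u w * Qw u w)),
         (fun u w => Q u w * Q u w).
  split; [poly|]. split; [poly|]. split.
  { repeat apply Rmult_integral_contrapositive_currified; auto. }
  intros u w Hu Hq. apply nz_mul in Hq. destruct Hq as [Hq _].
  destruct (K u w Hu Hq) as [E1 E2]. rewrite E1, E2. field. auto.
Qed.

Lemma reg_swap (U : R -> R -> Prop) F : regular_on U F ->
  regular_on (fun x y => U y x) (fun x y => F y x).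
Proof.
  intros H x y Hu. destruct (H y x Hu) as [p [q [hp [hq [hq0 E]]]]].
  exists (fun x y => p y x), (fun x y => q y x).
  split. apply poly_swap; auto. split. apply poly_swap; auto. split. exact hq0.
  intros; apply E; auto.
Qed.

Lemma dpl_affine' (g : R -> R) b s : (forall t, g t - g 0 = b * t) ->
  derivable_pt_lim g s b.
Proof. intro H. apply dpl_affine with (a := g 0). intro t. rewrite <- (H t). ring. Qed.

Lemma cst_cont c u w : continuity_2d_pt (fun _ _ => c) u w.
Proof. apply continuity_2d_pt_const. Qed.

Theorem proposition3p4 (k : nat) (f : R -> R -> R) (hf : Rk1 (S k) f)
  (v : R * R) : exists g : R -> R -> R, dirderiv f v g /\ Rk1 k g.
Proof.
  destruct hf as [[Ck Rat] [A [ND [Reg0 RegA]]]].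
  simpl in Ck. destruct Ck as [fx [fy [Hx [Hy [Cx Cy]]]]].
  destruct v as [v1 v2].
  pose proof (C1_diff f fx fy Hx Hy (Ck2_cont _ _ Cx)) as Df.
  assert (Ckg : Ck2 k (fun x y => v1 * fx x y + v2 * fy x y)) by (apply Ck2_lin; auto).
  pose proof (Ck2_cont _ _ Ckg) as Cg.
  exists (fun x y => v1 * fx x y + v2 * fy x y). split.
  { intros x y. simpl.
    pose proof (derivable_pt_lim_comp_2d f (fun t => x + t * v1) (fun t => y + t * v2) 0
      (fx (x + 0 * v1) (y + 0 * v2)) (fy (x + 0 * v1) (y + 0 * v2)) v1 v2 (Df _ _)
      (dpl_affine (fun t => x + t * v1) x v1 0 ltac:(intro; simpl; ring))
      (dpl_affine (fun t => y + t * v2) y v2 0 ltac:(intro; simpl; ring))) as D.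
    replace (x + 0 * v1) with x in D by ring. replace (y + 0 * v2) with y in D by ring.
    replace (v1 * fx x y + v2 * fy x y) with (fx x y * v1 + fy x y * v2) by ring. exact D. }
  split; [split|].
  - exact Ckg.
  - destruct Rat as [P [Q [G' [hP [hQ [hG [Gne Hrep]]]]]]].
    destruct (poly_dx P hP) as [Pu [hPu dPu]]. destruct (poly_dy P hP) as [Pw [hPw dPw]].
    destruct (poly_dx Q hQ) as [Qu [hQu dQu]]. destruct (poly_dy Q hQ) as [Qw [hQw dQw]].
    assert (Uo : forall x y, G' x y <> 0 -> locally_2d (fun x y => G' x y <> 0) x y).
    { intros. apply continuity_2d_pt_neq_0; auto. apply poly_cont; auto. }
    pose proof (K_gen (fun x y => G' x y <> 0) f fx fy P Pu Pw Q Qu Qw Uo Hx Hy dPu dPw dQu dQw hQ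
      (fun x y H _ => proj2 (Hrep x y H))) as K.
    exists (fun u w => v1 * (Pu u w * Q u w - P u w * Qu u w)
                  + v2 * (Pw u w * Q u w - P u w * Qw u w)),
         (fun u w => Q u w * Q u w), G'.
    split; [poly|]. split; [poly|]. split; [auto|]. split; [auto|].
    intros x y Hg. destruct (Hrep x y Hg) as [Hq _]. split.
    { apply Rmult_integral_contrapositive_currified; auto. }
    destruct (K x y Hg Hq) as [E1 E2]. rewrite E1, E2. field. auto.
  - exists A. split; [exact ND|]. split.
    + apply reg_deriv with (f := f); auto.
      intros x y H.
      apply locally_2d_impl with
        (fun x' y' => forall b, In b A -> True -> ((fun u w => u) x' y', (fun u w => w) x' y') <> b).
      { apply locally_2d_forall. intros x' y' H' Hin. apply (H' _ Hin I). reflexivity. }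
      apply open_avoid; try (intros; apply continuity_2d_pt_id1);
        try (intros; apply continuity_2d_pt_id2).
      intros b Hb _ E. apply H. rewrite E. exact Hb.
    + intros a Ha. destruct (RegA a Ha) as [R1 R2]. split.
      * apply chart_core with
          (F := fun u w => f (fst (chart1 a u w)) (snd (chart1 a u w)))
          (Fu := fun u w => fx (fst a + u) (snd a + u * w) * 1 + fy (fst a + u) (snd a + u * w) * w)
          (Fw := fun u w => fx (fst a + u) (snd a + u * w) * 0 + fy (fst a + u) (snd a + u * w) * u)
          (c1 := v1) (c2 := v2).
        -- intros u w H.
           apply locally_2d_impl with (fun u' w' => forall b, In b A -> b <> a ->
              ((fun u w => fst a + u) u' w', (fun u w => snd a + u * w) u' w') <> b).
           { apply locally_2d_forall. intros u' w' H' b Hb Hne. apply (H' b Hb Hne). }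
           apply open_avoid.
           ++ intros; apply continuity_2d_pt_plus; [apply cst_cont | apply continuity_2d_pt_id1].
           ++ intros; apply continuity_2d_pt_plus; [apply cst_cont|].
              apply continuity_2d_pt_mult; [apply continuity_2d_pt_id1 | apply continuity_2d_pt_id2].
           ++ exact H.
        -- intros w b Hb Hne E. apply Hne. rewrite <- E. unfold chart1.
           destruct a; simpl; f_equal; ring.
        -- intros u w.
           apply (derivable_pt_lim_comp_2d f (fun t => fst a + t) (fun t => snd a + t * w)).
           ++ apply Df.
           ++ apply dpl_affine'; intros; simpl; ring.
           ++ apply dpl_affine'; intros; simpl; ring.
        -- intros u w.
           apply (derivable_pt_lim_comp_2d f (fun t => fst a + u) (fun t => snd a + u * t)).
           ++ apply Df.
           ++ apply dpl_affine'; intros; simpl; ring.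
           ++ apply dpl_affine'; intros; simpl; ring.
        -- intros w. ring.
        -- intros u w Hu. simpl. field. exact Hu.
        -- intros u w.
           apply (cont_comp (fun x y => v1 * fx x y + v2 * fy x y)
                    (fun u w => fst a + u) (fun u w => snd a + u * w)); auto.
           ++ apply continuity_2d_pt_plus; [apply cst_cont | apply continuity_2d_pt_id1].
           ++ apply continuity_2d_pt_plus; [apply cst_cont|].
              apply continuity_2d_pt_mult; [apply continuity_2d_pt_id1 | apply continuity_2d_pt_id2].
        -- exact R1.
      * apply (reg_swap (fun s t => chart_dom A a chart2 t s)
                (fun s t => v1 * fx (fst (chart2 a t s)) (snd (chart2 a t s))
                          + v2 * fy (fst (chart2 a t s)) (snd (chart2 a t s)))).
        apply chart_core with
          (F := fun s t => f (fst (chart2 a t s)) (snd (chart2 a t s)))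
          (Fu := fun s t => fx (fst a + t * s) (snd a + s) * t + fy (fst a + t * s) (snd a + s) * 1)
          (Fw := fun s t => fx (fst a + t * s) (snd a + s) * s + fy (fst a + t * s) (snd a + s) * 0)
          (c1 := v2) (c2 := v1).
        -- intros u w H.
           apply locally_2d_impl with (fun u' w' => forall b, In b A -> b <> a ->
              ((fun s t => fst a + t * s) u' w', (fun s t => snd a + s) u' w') <> b).
           { apply locally_2d_forall. intros u' w' H' b Hb Hne. apply (H' b Hb Hne). }
           apply open_avoid.
           ++ intros; apply continuity_2d_pt_plus; [apply cst_cont|].
              apply continuity_2d_pt_mult; [apply continuity_2d_pt_id2 | apply continuity_2d_pt_id1].
           ++ intros; apply continuity_2d_pt_plus; [apply cst_cont | apply continuity_2d_pt_id1].
           ++ exact H.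
        -- intros w b Hb Hne E. apply Hne. rewrite <- E. unfold chart2.
           destruct a; simpl; f_equal; ring.
        -- intros u w.
           apply (derivable_pt_lim_comp_2d f (fun s => fst a + w * s) (fun s => snd a + s)).
           ++ apply Df.
           ++ apply dpl_affine'; intros; simpl; ring.
           ++ apply dpl_affine'; intros; simpl; ring.
        -- intros u w.
           apply (derivable_pt_lim_comp_2d f (fun t => fst a + t * u) (fun t => snd a + u)).
           ++ apply Df.
           ++ apply dpl_affine'; intros; simpl; ring.
           ++ apply dpl_affine'; intros; simpl; ring.
        -- intros w. ring.
        -- intros u w Hu. simpl. field. exact Hu.
        -- intros u w.
           apply (cont_comp (fun x y => v1 * fx x y + v2 * fy x y)
                    (fun s t => fst a + t * s) (fun s t => snd a + s)); auto.
           ++ apply continuity_2d_pt_plus; [apply cst_cont|].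
              apply continuity_2d_pt_mult; [apply continuity_2d_pt_id2 | apply continuity_2d_pt_id1].
           ++ apply continuity_2d_pt_plus; [apply cst_cont | apply continuity_2d_pt_id1].
        -- apply (reg_swap _ _ R2).
Qed.
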